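(* Let $p_1,\dots,p_k\in\mathbb{K}[x_1,\dots,x_d]$ be pure difference binomials and let $L\subseteq\mathbb{Z}^d$ be the lattice spanned by their exponent vectors. There exists a linear loop with a diagonal update matrix $M\in\mathbb{Q}^{d\times d}$ (and initial vector in $\mathbb{Q}^d$) whose invariant ideal is $I_{\operatorname{Sat}(L)}$.
   Context: $\mathbb{K}=\overline{\mathbb{Q}}$. A pure difference binomial is $\bm{x}^{\bm{\alpha}}-\bm{x}^{\bm{\beta}}$ with $\bm{\alpha},\bm{\beta}\in\mathbb{N}^d$; its exponent vector is $\bm{\alpha}-\bm{\beta}$. $\operatorname{Sat}(L)=\{\bm{u}\in\mathbb{Z}^d : c\bm{u}\in L\text{ for some } c\in\mathbb{Z}\setminus\{0\}\}$; the lattice ideal of a lattice $L'$ is $I_{L'}=\langle \bm{x}^{\bm{\alpha}}-\bm{x}^{\bm{\beta}} : \bm{\alpha},\bm{\beta}\in\mathbb{N}^d,\ \bm{\alpha}-\bm{\beta}\in L'\rangle$. A linear loop with initial vector $\bm{s}$ and update matrix $M$ has orbit $M^n\bm{s}$, $n\ge0$; a polynomial $P\in\mathbb{K}[\bm{x}]$ is an invariant if $P(M^n\bm{s})=0$ for all $n\ge0$, and the invariant ideal is the ideal of all invariants. *)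

(* Defs.v *)
From HB Require Import structures.
From mathcomp Require Import all_boot all_order all_algebra all_field.
From mathcomp Require Import mpoly.
Set Implicit Arguments. Unset Strict Implicit. Unset Printing Implicit Defensive.
Import Order.TTheory GRing.Theory Num.Theory.
Local Open Scope ring_scope.

(* K = \overline{Q} is modelled by algC (the algebraic numbers). *)

Definition pdbinom (d : nat) (a b : 'X_{1..d}) : {mpoly algC[d]} :=
  'X_[a] - 'X_[b].

Definition expvec (d : nat) (a b : 'X_{1..d}) : 'rV[int]_d :=
  \row_j ((a j)%:Z - (b j)%:Z).

Definition span_lattice (d k : nat) (v : 'I_k -> 'rV[int]_d) : 'rV[int]_d -> Prop :=
  fun u => exists c : 'I_k -> int, u = \sum_(i < k) c i *: v i.

Definition Sat (d : nat) (L : 'rV[int]_d -> Prop) : 'rV[int]_d -> Prop :=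
  fun u => exists c : int, c != 0 /\ L (c *: u).

Definition ideal_gen (d : nat) (G : {mpoly algC[d]} -> Prop) : {mpoly algC[d]} -> Prop :=
  fun P => exists (s : seq ({mpoly algC[d]} * {mpoly algC[d]})),
     (forall q, q \in s -> G q.2) /\ P = \sum_(q <- s) q.1 * q.2.

Definition lattice_ideal (d : nat) (L' : 'rV[int]_d -> Prop) : {mpoly algC[d]} -> Prop :=
  ideal_gen (fun P => exists a b : 'X_{1..d}, L' (expvec a b) /\ P = pdbinom a b).

Definition orbit (d : nat) (M : 'M[rat]_d) (s : 'cV[rat]_d) (n : nat) : 'cV[rat]_d :=
  iter n (mulmx M) s.

Definition invariant_ideal (d : nat) (M : 'M[rat]_d) (s : 'cV[rat]_d) :
  {mpoly algC[d]} -> Prop :=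
  fun P => forall n : nat, P.@[fun j => ratr (orbit M s n j 0)] = 0.

(* Main.v *)
Require Import Defs.
From HB Require Import structures.
From mathcomp Require Import all_boot all_order all_algebra all_field.
From mathcomp Require Import mpoly zify ring.
Import Order.TTheory GRing.Theory Num.Theory.
Local Open Scope ring_scope.

Section Group.
Variables (X : eqType) (R : nmodType) (Y : eqType).
Lemma group_sum (S : seq X) (F : X -> R) (g : X -> Y) :
  \sum_(m <- S) F m = \sum_(z <- undup (map g S)) \sum_(m <- S | g m == z) F m.
Proof.
under [RHS]eq_bigr do rewrite big_mkcond.
rewrite exchange_big /=; apply: eq_big_seq => m mS.
rewrite -big_mkcond /= (eq_bigl (pred1 (g m))); last by move=> z; rewrite /= eq_sym.
rewrite -big_filter filter_pred1_uniq ?undup_uniq ?big_seq1 //.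
by rewrite mem_undup map_f.
Qed.
End Group.

Lemma indep (X : eqType) (S : seq X) (c mu : X -> algC) :
  (forall n, \sum_(m <- S) c m * mu m ^+ n = 0) ->
  forall z, \sum_(m <- S | mu m == z) c m = 0.
Proof.
move=> H z.
have Hq : forall q : {poly algC}, \sum_(m <- S) c m * q.[mu m] = 0.
  move=> q; under eq_bigr do rewrite horner_coef big_distrr /=.
  rewrite exchange_big /= big1 // => i _.
  under eq_bigr do rewrite mulrCA.
  by rewrite -big_distrr /= H mulr0.
pose q := \prod_(w <- map mu S | w != z) ('X - w%:P).
have qE x : q.[x] = \prod_(w <- map mu S | w != z) (x - w).
  by rewrite /q horner_prod; apply: eq_bigr => w _; rewrite hornerXsubC.
have qz : q.[z] != 0.
  by rewrite qE prodf_seq_neq0; apply/allP => w _; apply/implyP; rewrite subr_eq0 eq_sym.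
have := Hq q; rewrite (bigID (fun m => mu m == z)) /= [X in _ + X]big1_seq; last first.
  move=> m /andP[nz mS]; rewrite qE; apply/eqP; rewrite mulf_eq0; apply/orP; right.
  rewrite prodf_seq_eq0; apply/hasP; exists (mu m); first by rewrite map_f.
  by rewrite nz subrr eqxx.
rewrite addr0.
under eq_bigr => m /eqP -> do rewrite mulrC.
by rewrite -big_distrr /= => /eqP; rewrite mulf_eq0 (negPf qz) /= => /eqP.
Qed.
Local Open Scope ring_scope.

Lemma ideal_gen_mono d (G G' : {mpoly algC[d]} -> Prop) P :
  (forall Q, G Q -> G' Q) -> ideal_gen G P -> ideal_gen G' P.
Proof. by move=> H [s [Hs ->]]; exists s; split => // q /Hs /H. Qed.

Section PartA.
Variables (d : nat) (v : nat -> 'I_d -> algC) (mu : 'X_{1..d} -> algC).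
Hypothesis Hmu : forall n m, ('X_[m] : {mpoly algC[d]}).@[v n] = mu m ^+ n.

Definition Gmu (Q : {mpoly algC[d]}) := exists a b, mu a = mu b /\ Q = pdbinom a b.

Lemma evalE (P : {mpoly algC[d]}) n :
  P.@[v n] = \sum_(m <- msupp P) P@_m * mu m ^+ n.
Proof. by rewrite mevalE; apply: eq_bigr => m _; rewrite -mevalX Hmu. Qed.

Lemma partA (P : {mpoly algC[d]}) :
  (forall n, P.@[v n] = 0) <-> ideal_gen Gmu P.
Proof.
split.
- move=> H.
  have Hz := @indep _ (msupp P) (fun m => P@_m) mu (fun n => etrans (esym (evalE P n)) (H n)).
  set S := msupp P in Hz *.
  pose repz z := nth 0%MM S (find (fun m' => mu m' == z) S).
  have Hrep m : m \in S -> mu (repz (mu m)) = mu m.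
    move=> mS; apply/eqP; rewrite /repz; apply: (@nth_find _ _ (fun m' => mu m' == mu m)).
    by apply/hasP; exists m.
  exists [seq ((P@_m)%:MP, pdbinom m (repz (mu m))) | m <- S]; split.
    move=> q /mapP [m mS ->] /=; exists m, (repz (mu m)); split => //.
    by rewrite Hrep.
  rewrite big_map {1}(mpolyE P) -/S.
  under [RHS]eq_bigr do rewrite /pdbinom /= mul_mpolyC scalerBr.
  rewrite sumrB.
  suff -> : \sum_(m <- S) P@_m *: 'X_[repz (mu m)] = 0 :> {mpoly algC[d]} by rewrite subr0.
  rewrite (@group_sum _ _ _ _ _ mu) big1 // => z _.
  rewrite (eq_bigr (fun m => P@_m *: 'X_[repz z])); last by move=> m /eqP ->.
  by rewrite -scaler_suml Hz scale0r.
- move=> [s [Hs ->]] n.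
  rewrite raddf_sum /= big1_seq // => q /andP[_ /Hs [a [b [Hab ->]]]].
  by rewrite mevalM /pdbinom mevalB !Hmu Hab subrr mulr0.
Qed.
End PartA.

Fixpoint pr (n : nat) : nat :=
  if n is n'.+1 then sval (prime_above (pr n')) else 2.

Lemma pr_prime n : prime (pr n).
Proof. by case: n => [|n] //=; case: prime_above. Qed.

Lemma pr_lt n : (pr n < pr n.+1)%N.
Proof. by rewrite /=; case: prime_above. Qed.

Lemma pr_inj : injective pr.
Proof.
apply: incn_inj; apply: leq_mono; apply: homo_ltn; [exact: ltn_trans | exact: pr_lt].
Qed.

Lemma logn_prodpr d (a : 'I_d -> nat) (l0 : 'I_d) :
  logn (pr l0) (\prod_(l < d) pr l ^ a l) = a l0.
Proof.
have : (0 < \prod_(l < d) pr l ^ a l)%N /\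
       logn (pr l0) (\prod_(l < d) pr l ^ a l) = \sum_(l < d) (a l * (pr l0 == pr l))%N.
  apply: (big_ind2 (fun x y => 0 < x /\ logn (pr l0) x = y)%N).
  - by rewrite logn1.
  - by move=> x1 x2 y1 y2 [p1 e1] [p2 e2]; rewrite muln_gt0 p1 p2 lognM // e1 e2.
  - move=> l _; rewrite expn_gt0 prime_gt0 ?pr_prime // lognX logn_prime ?pr_prime //.
move=> [_ ->]; rewrite (bigD1 l0) //= eqxx muln1 big1; first exact: addn0.
by move=> l nl; rewrite (inj_eq pr_inj) (_ : (l0 == l :> nat) = false) ?muln0 // eq_sym; apply/negbTE.
Qed.

Lemma indep_pr d (x y : 'I_d -> int) :
  \prod_(l < d) ((pr l)%:R : rat) ^ x l = \prod_(l < d) ((pr l)%:R : rat) ^ y l ->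
  forall l, x l = y l.
Proof.
move=> H.
pose N := \sum_(l < d) (`|x l| + `|y l|)%N.
have Nx l : (`|x l| <= N)%N.
  rewrite /N (bigD1 l) //=; lia.
have Ny l : (`|y l| <= N)%N.
  rewrite /N (bigD1 l) //=; lia.
pose a l := absz (x l + N%:Z). pose b l := absz (y l + N%:Z).
have aE l : (a l)%:Z = x l + N%:Z.
  rewrite /a gez0_abs //; have := Nx l; lia.
have bE l : (b l)%:Z = y l + N%:Z.
  rewrite /b gez0_abs //; have := Ny l; lia.
have pu l : ((pr l)%:R : rat) \is a GRing.unit.
  by rewrite unitfE pnatr_eq0 -lt0n prime_gt0 ?pr_prime.
have Hab : (\prod_(l < d) pr l ^ a l = \prod_(l < d) pr l ^ b l)%N.
  apply/eqP; rewrite -(eqr_nat rat) !natr_prod; apply/eqP.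
  transitivity (\prod_(l < d) ((pr l)%:R : rat) ^ (x l) * \prod_(l < d) ((pr l)%:R : rat) ^ (N%:Z)).
    rewrite -big_split /=; apply: eq_bigr => l _.
    by rewrite natrX -exprzDr // -aE.
  rewrite H -big_split /=; apply: eq_bigr => l _.
  by rewrite natrX -exprzDr // -bE.
move=> l; have := @logn_prodpr _ a l; rewrite Hab logn_prodpr => /(congr1 Posz).
rewrite aE bE => /addIr. done.
Qed.

Lemma clear_den (I : finType) (x : I -> rat) :
  exists D : int, D != 0 /\ forall i, exists z : int, (z%:~R : rat) = D%:~R * x i.
Proof.
exists (\prod_i denq (x i)); split.
  by rewrite prodf_seq_neq0; apply/allP => i _; rewrite denq_neq0.
move=> i; exists (numq (x i) * \prod_(j | j != i) denq (x j)).
rewrite [in RHS](bigD1 i) //= !intrM numqE; ring.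
Qed.

Section SatB.
Variables (d k : nat) (v : 'I_k -> 'rV[int]_d).
Definition Bq : 'M[rat]_(k, d) := \matrix_(i, j) ((v i 0 j)%:~R).

Lemma Sat_submx (u : 'rV[int]_d) :
  Sat (span_lattice v) u <-> (map_mx intr u <= Bq)%MS.
Proof.
split.
- move=> [c [c0 [w Hw]]].
  apply/submxP; exists (\row_i ((w i)%:~R / c%:~R)).
  apply/rowP => j; rewrite !mxE.
  have := congr1 (fun M : 'rV[int]_d => (M 0 j)%:~R : rat) Hw => /=.
  rewrite !mxE summxE rmorph_sum /= intrM => Hj.
  have cq : (c%:~R : rat) != 0 by rewrite intr_eq0.
  apply: (mulfI cq); rewrite Hj mulr_sumr; apply: eq_bigr => i _.
  rewrite !mxE intrM; field => //.
- move/submxP => [W HW].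
  have [D [D0 HD]] := @clear_den _ (fun i => W 0 i).
  have [z Hz] := fin_all_exists HD.
  exists D; split => //; exists z.
  apply/rowP => j; apply: (@intr_inj rat).
  have := congr1 (fun M : 'rV[rat]_d => M 0 j) HW; rewrite !mxE => E.
  rewrite intrM E summxE rmorph_sum /= mulr_sumr; apply: eq_bigr => i _.
  by rewrite !mxE intrM Hz mulrA.
Qed.
End SatB.

Section Assemble.
Variables (d k : nat) (a b : 'I_k -> 'X_{1..d}).
Let vv := fun i => expvec (a i) (b i).
Variable C : 'M[rat]_d.
Hypothesis HC : forall u : 'rV[rat]_d, (u <= @Bq d k vv)%MS = (u *m C == 0).
Variables (Af : 'I_d -> 'I_d -> int) (D : int).
Hypothesis D0 : D != 0.
Hypothesis HA : forall j l, ((Af j l)%:~R : rat) = D%:~R * C j l.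

Let p (l : 'I_d) : rat := (pr l)%:R.
Let pu l : p l \is a GRing.unit.
Proof. by rewrite unitfE pnatr_eq0 -lt0n prime_gt0 ?pr_prime. Qed.

Definition lam (j : 'I_d) : rat := \prod_(l < d) p l ^ Af j l.
Definition mon (m : 'X_{1..d}) : rat := \prod_(j < d) lam j ^+ m j.
Definition Ee (m : 'X_{1..d}) (l : 'I_d) : int := \sum_(j < d) (m j)%:Z * Af j l.

Lemma monE m : mon m = \prod_(l < d) p l ^ Ee m l.
Proof.
rewrite /mon /lam.
under eq_bigr do rewrite -prodrXl.
rewrite exchange_big /=; apply: eq_bigr => l _.
rewrite /Ee.
rewrite (big_morph (fun e : int => p l ^ e) (fun x y => exprzDr (pu l) x y) (expr0z (p l))).
by apply: eq_bigr => j _; rewrite exprnP exprz_exp mulrC.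
Qed.

Lemma key (x y : 'X_{1..d}) :
  Sat (span_lattice vv) (expvec x y) <-> mon x = mon y.
Proof.
rewrite Sat_submx HC.
have Hent l : D%:~R * (map_mx intr (expvec x y) *m C) 0 l = (Ee x l - Ee y l)%:~R :> rat.
  rewrite !mxE mulr_sumr /Ee -sumrB rmorph_sum /=; apply: eq_bigr => j _.
  by rewrite !mxE -mulrBl !intrM mulrCA -HA.
split.
- move/eqP => H0; rewrite !monE; apply: eq_bigr => l _; congr (_ ^ _).
  apply/eqP; rewrite -subr_eq0 -(@intr_eq0 rat) -Hent H0 mxE mulr0 //.
- rewrite !monE => /indep_pr H; apply/eqP/rowP => l.
  rewrite [RHS]mxE.
  have Dq : (D%:~R : rat) != 0 by rewrite intr_eq0.
  by have := Hent l; rewrite H subrr mulr0z => /eqP; rewrite mulf_eq0 (negPf Dq) => /eqP.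
Qed.

Definition lamr : 'rV[rat]_d := \row_j lam j.

Lemma orbitE n j : Defs.orbit (diag_mx lamr) (const_mx 1) n j 0 = lam j ^+ n.
Proof.
elim: n j => [|n IH] j; first by rewrite /Defs.orbit /= mxE expr0.
by rewrite /Defs.orbit iterS -/(Defs.orbit _ _ n) mul_diag_mx mxE IH mxE exprS.
Qed.

Lemma final : exists (M : 'M[rat]_d) (s : 'cV[rat]_d),
    is_diag_mx M /\
    (forall P : {mpoly algC[d]},
       invariant_ideal M s P <-> lattice_ideal (Sat (span_lattice vv)) P).
Proof.
exists (diag_mx lamr), (const_mx 1); split; first exact: diag_mx_is_diag.
move=> P.
pose v n := fun j => (ratr (Defs.orbit (diag_mx lamr) (const_mx 1) n j 0) : algC).
pose mu m := (ratr (mon m) : algC).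
have Hmu n m : ('X_[m] : {mpoly algC[d]}).@[v n] = mu m ^+ n.
  rewrite mevalX /mu /mon rmorph_prod -prodrXl; apply: eq_bigr => j _.
  by rewrite /v orbitE !rmorphXn /= exprAC.
apply: iff_trans (@partA d v mu Hmu P) _.
split; apply: ideal_gen_mono => Q [x [y [H ->]]]; exists x, y; split => //.
- by apply/key; apply: (fmorph_inj (@ratr algC)).
- by rewrite /mu; congr ratr; apply/key.
Qed.
End Assemble.

Theorem theorem3p7 (d k : nat) (a b : 'I_k -> 'X_{1..d}) :
  exists (M : 'M[rat]_d) (s : 'cV[rat]_d),
    is_diag_mx M /\
    (forall P : {mpoly algC[d]},
       invariant_ideal M s P <->
       lattice_ideal (Sat (span_lattice (fun i => expvec (a i) (b i)))) P).
Proof.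
pose C := cokermx (@Bq d k (fun i => expvec (a i) (b i))).
have [D [D0 HD]] := @clear_den _ (fun q : 'I_d * 'I_d => C q.1 q.2).
have [Af HAf] := fin_all_exists HD.
apply: (@final d k a b C _ (fun j l => Af (j, l)) D D0).
- by move=> u; rewrite submxE.
- by move=> j l; rewrite HAf.
Qed.
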